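(* Let $V$ be a finite set of variables, let $D_{\mathit{dag}}$ be the ABA framework defined in the context, and let $\sigma\in\{\text{preferred},\text{stable}\}$. Then each directed acyclic graph $G$ with node set $V$ corresponds to a unique $S\in\sigma(D_{\mathit{dag}})$ and vice versa, where $S$ corresponds to the graph $(V,\{(x,y)\mid \mathit{arr}_{xy}\in S\})$.
   Context: Assumption-based argumentation (ABA). An ABA framework is a tuple $D=(\mathcal L,\mathcal R,\mathcal A,\overline{\cdot})$ with sentences $\mathcal L$, rules $\mathcal R$ of the form $a_0\leftarrow a_1,\dots,a_n$ ($n\ge0$), assumptions $\mathcal A\subseteq\mathcal L$ and contrary function $\overline{\cdot}:\mathcal A\to\mathcal L$. For $S\subseteq\mathcal A$, $S\vdash q$ if there is a finite rooted labelled tree with root $q$, set of leaf labels $S$ or $S\cup\{\top\}$, and every inner node labelled by the head of some rule whose children are labelled by the distinct body elements of that rule (a single child $\top$ for an empty body). $S$ attacks $T$ if some $S'\subseteq S$ derives $\overline a$ for some $a\in T$. $S$ is conflict-free if it does not attack itself; it defends $T$ if it attacks every attacker of $T$; admissible if conflict-free and self-defending; complete if admissible and contains every assumption set it defends; preferred if $\subseteq$-maximal complete; stable if admissible and it attacks $\{a\}$ for every assumption $a\notin S$. The framework $D_{\mathit{dag}}$: for a finite set $V$, assumptions are $\mathit{arr}_{xy}$ for all ordered pairs $x\ne y$ in $V$ and one assumption $\mathit{noe}_{xy}=\mathit{noe}_{yx}$ per unordered pair of distinct variables; each assumption $a$ has its own distinct fresh contrary $\overline a$; rules are (i) $\overline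 a\leftarrow b$ for all distinct $a,b\in\{\mathit{arr}_{xy},\mathit{arr}_{yx},\mathit{noe}_{xy}\}$; (ii) for every sequence $x_1\dots x_k$ of variables with consecutive elements distinct and $x_1=x_k$, and every $1\le i<k$, the rule $\overline{\mathit{arr}_{x_ix_{i+1}}}\leftarrow\mathit{arr}_{x_1x_2},\dots,\mathit{arr}_{x_{k-1}x_k}$. *)

(* Defs.v *)
From Stdlib Require List.
From HB Require Import structures.
From mathcomp Require Import all_boot.
Set Implicit Arguments.
Unset Strict Implicit.
Unset Printing Implicit Defensive.

(* Sentences form an eqType; the
   assumptions are a finite type embedded into the sentences by [asm_sent]
   (A is a subset of L); [contrary] is the contrary function; [rule h b]
   means that  h <- b  is a rule of R (b the list of body elements). *)
Record ABA := {
  sent : eqType;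
  asm : finType;
  asm_sent : asm -> sent;
  contrary : asm -> sent;
  rule : sent -> seq sent -> Prop
}.

(* Finite rooted labelled trees; [Top] is the special label  T  used as the
   unique child of a node whose rule has empty body. *)
Inductive dtree (L : Type) :=
  | Top : dtree L
  | Nd : L -> seq (dtree L) -> dtree L.
Arguments Top {L}.

Definition droot (L : Type) (t : dtree L) : option L :=
  match t with Top => None | Nd x _ => Some x end.

Section Deriv.
Variable D : ABA.
Notation L := (sent D).

Inductive valid_tree : dtree L -> Prop :=
  | vt_top : valid_tree Top
  | vt_leaf x : valid_tree (Nd x [::])
  | vt_node x (ch : seq (dtree L)) (body : seq L) :
      ch <> [::] ->
      @rule D x body ->
      ((body = [::] /\ ch = [:: Top]) \/
       (body <> [::] /\ perm_eq (map (@droot L) ch) (map Some (undup body)))) ->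
      (forall c, List.In c ch -> valid_tree c) ->
      valid_tree (Nd x ch).

Inductive leaf_label : dtree L -> L -> Prop :=
  | ll_here x : leaf_label (Nd x [::]) x
  | ll_child x ch c y : List.In c ch -> leaf_label c y -> leaf_label (Nd x ch) y.

(* S |- q : a tree with root q whose set of leaf labels is S or S u {T}. *)
Definition derives (S : {set asm D}) (q : L) : Prop :=
  exists t : dtree L, [/\ valid_tree t, droot t = Some q &
    forall y : L, leaf_label t y <-> exists2 a, a \in S & asm_sent a = y].

Definition attacks (S T : {set asm D}) : Prop :=
  exists S' : {set asm D}, exists a : asm D,
    [/\ S' \subset S, a \in T & derives S' (contrary a)].

Definition conflict_free (S : {set asm D}) : Prop := ~ attacks S S.

Definition defends (S T : {set asm D}) : Prop :=
  forall U : {set asm D}, attacks U T -> attacks S U.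

Definition admissible (S : {set asm D}) : Prop :=
  conflict_free S /\ defends S S.

Definition complete (S : {set asm D}) : Prop :=
  admissible S /\ forall T : {set asm D}, defends S T -> T \subset S.

Definition preferred (S : {set asm D}) : Prop :=
  complete S /\ forall T : {set asm D}, complete T -> S \subset T -> T = S.

Definition stable (S : {set asm D}) : Prop :=
  admissible S /\ forall a : asm D, a \notin S -> attacks S [set a].

End Deriv.

Inductive semantics := Preferred | Stable.

Definition extension (sg : semantics) (D : ABA) (S : {set asm D}) : Prop :=
  match sg with
  | Preferred => preferred S
  | Stable => stable S
  end.

Section Ddag.
Variable V : finType.

(* raw assumption codes: inl (x,y) = arr_xy, inr e = noe_e (e = {x,y}) *)
Definition raw_asm := ((V * V) + {set V})%type.

Definition ok_asm (r : raw_asm) : bool :=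
  match r with
  | inl (x, y) => x != y
  | inr e => #|e| == 2
  end.

(* assumptions: arr_xy for ordered pairs x != y, one noe per unordered pair *)
Definition dag_asm : finType := {r : raw_asm | ok_asm r}.

(* sentences: assumptions (inl a) and their distinct fresh contraries (inr a) *)
Definition dag_sent : eqType := (dag_asm + dag_asm)%type.

Definition pair_of (a : dag_asm) : {set V} :=
  match val a with
  | inl (x, y) => [set x; y]
  | inr e => e
  end.

(* code of a sentence: (is_contrary, raw assumption code) *)
Definition code (s : dag_sent) : bool * raw_asm :=
  match s with inl a => (false, val a) | inr a => (true, val a) end.

Definition dag_rule (h : dag_sent) (body : seq dag_sent) : Prop :=
  (* (i) contrary(a) <- b  for distinct a, b in {arr_xy, arr_yx, noe_xy} *)
  (exists a b : dag_asm,
      [/\ a != b, pair_of a = pair_of b, h = inr a & body = [:: inl b]])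
  \/
  (* (ii) cycles x_1 ... x_k, x_1 = x_k, consecutive distinct, 1 <= i < k:
          contrary(arr_{x_i x_{i+1}}) <- arr_{x_1 x_2}, ..., arr_{x_{k-1} x_k} *)
  (exists (x1 : V) (rest : seq V) (i : nat),
      let s := x1 :: rest in
      [/\ last x1 rest = x1,
          (forall j, j.+1 < size s -> nth x1 s j != nth x1 s j.+1),
          i.+1 < size s,
          code h = (true, inl (nth x1 s i, nth x1 s i.+1)) &
          map code body =
            [seq (false, inl (nth x1 s j, nth x1 s j.+1)) | j <- iota 0 (size s).-1]]).

Definition D_dag : ABA :=
  {| sent := dag_sent; asm := dag_asm; asm_sent := inl; contrary := inr;
     rule := dag_rule |}.

Definition graph_of (S : {set dag_asm}) : rel V :=
  fun x y => [exists a in S, val a == inl (x, y)].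

End Ddag.

(* a directed graph on the finite node set V, given by its edge relation, is
   acyclic iff there is no directed cycle (of length >= 1, so no self-loops) *)
Definition acyclic (V : finType) (G : rel V) : Prop :=
  forall x y : V, G x y -> ~~ connect G y x.

(* Main.v *)
Require Import Defs.
From mathcomp Require Import all_boot.
From Stdlib Require List.
Set Implicit Arguments.
Unset Strict Implicit.
Unset Printing Implicit Defensive.

Section Gen.
Variable D : ABA.
Implicit Types S T U : {set asm D}.

Lemma attacks_mono S1 S2 T1 T2 : S1 \subset S2 -> T1 \subset T2 ->
  attacks S1 T1 -> attacks S2 T2.
Proof.
move=> s12 t12 [S' [a [sS aT d]]]; exists S', a; split=> //.
  exact: subset_trans sS s12.
exact: (subsetP t12).
Qed.

Lemma stable_complete S : stable S -> complete S.
Proof.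
move=> [[cf df] st]; split; first by [].
move=> T dT; apply/subsetP => a aT; apply/negPn/negP => naS.
apply: cf; apply: dT; apply: attacks_mono (st a naS) => //.
by rewrite sub1set.
Qed.

Lemma stable_preferred S : stable S -> preferred S.
Proof.
move=> st; split; first exact: stable_complete.
move=> T [[cfT _] _] sST; apply/eqP; rewrite eqEsubset sST andbT.
apply/subsetP => a aT; apply/negPn/negP => naS.
apply: cfT; apply: attacks_mono (st.2 a naS) => //; by rewrite sub1set.
Qed.

Lemma leaf_inv x ch y : @leaf_label D (Nd x ch) y ->
  (ch = [::] /\ y = x) \/ exists c, List.In c ch /\ @leaf_label D c y.
Proof. inversion 1; subst; eauto. Qed.

End Gen.

Lemma In_mem (T : eqType) (x : T) s : x \in s -> List.In x s.
Proof.
elim: s => //= y s IH; rewrite inE => /orP [/eqP ->|/IH]; auto.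
Qed.

Lemma mem_In (T : eqType) (x : T) s : List.In x s -> x \in s.
Proof.
elim: s => //= y s IH [->|/IH H]; rewrite inE ?eqxx ?H ?orbT //.
Qed.

Lemma mem_map_In (A : Type) (B : eqType) (f : A -> B) s y :
  y \in map f s -> exists c, List.In c s /\ f c = y.
Proof.
elim: s => //= c s IH; rewrite inE => /orP [/eqP ->|/IH [c' [H1 H2]]].
  by exists c; split; [left|].
by exists c'; split; [right|].
Qed.

Section Dag.
Variable V : finType.
Local Notation A := (dag_asm V).
Local Notation Ls := (dag_sent V).
Local Notation DD := (D_dag V).

Lemma rule_inl b body : ~ @dag_rule V (inl b : Ls) body.
Proof.
case=> [[a [c [_ _ H _]]] | [x1 [rest [i [_ _ _ H _]]]]]; first discriminate.
move: H => /=; discriminate.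
Qed.

Lemma rule_body_inl h body y : @dag_rule V h body -> y \in body ->
  exists b, y = inl b.
Proof.
case=> [[a [c [_ _ _ ->]]] | [x1 [rest [i [_ _ _ _ Hb]]]]].
  by rewrite inE => /eqP ->; exists c.
move=> yb; have : code y \in map (@code V) body by apply: map_f.
rewrite Hb => /mapP [j _]; case: y {yb} => [b|b] /= E; first by exists b.
discriminate.
Qed.

Lemma rule_body_nil h body : @dag_rule V h body -> body <> [::].
Proof.
case=> [[a [c [_ _ _ ->]]] // | [x1 [rest [i [_ _ Hi _ Hb]]]]] E.
move: Hb; rewrite E /= => /(congr1 size); rewrite size_map size_iota /=.
by case: rest Hi {E}.
Qed.

Lemma map_undup_nil (B : Type) (f : Ls -> B) s : s <> [::] -> map f (undup s) <> [::].
Proof.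
move=> sn E; apply: sn; apply: undup_nil.
by case: (undup s) E.
Qed.

Lemma derives_inr (S' : {set A}) a : @derives DD S' (inr a) ->
  exists body, @dag_rule V (inr a) body /\
    forall y, y \in body -> exists2 b, b \in S' & y = inl b.
Proof.
case=> t [vt rt ll].
case: vt rt ll => [| x | x ch body chn r hb hc] //=.
- move=> [->] ll.
  have : @leaf_label DD (Nd (inr a) [::]) (inr a) by constructor.
  by move/ll => [b _ E].
- move=> [Ex] ll; subst x; exists body; split => // y yb.
  have [b Eb] := rule_body_inl r yb; subst y.
  have : @leaf_label DD (Nd (inr a) ch) (inl b).
    case: hb => [[Eb _]|[_ P]]; first by rewrite Eb in yb.
    have : Some (inl b : Ls) \in map (@droot _) ch.
      by rewrite (perm_mem P) map_f // mem_undup.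
    case/mem_map_In => c [Hc Rc].
    apply: (@ll_child DD _ _ _ _ Hc).
    case: (hc c Hc) Rc => [| z | z ch' body' _ r' _ _] //=.
    + by move=> [->]; constructor.
    + by move=> [Ez]; subst z; case: (rule_inl r').
  by move/ll => [b' b'S E]; exists b' => //; rewrite -E.
Qed.

Lemma attack_cons (S T : {set A}) a body : a \in T -> @dag_rule V (inr a) body ->
  (forall y, y \in body -> exists2 b, b \in S & y = inl b) -> @attacks DD S T.
Proof.
move=> aT r hb.
exists [set b | (inl b : Ls) \in body], a; split => //.
  apply/subsetP => b; rewrite inE => /hb [b' b'S [->]]; done.
exists (Nd (inr a : Ls) (map (fun y => Nd y [::]) (undup body))); split => //.
- apply: (@vt_node DD _ _ body _ r).
  + exact: map_undup_nil (rule_body_nil r).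
  + right; split; first exact: rule_body_nil r.
    rewrite -map_comp; exact: perm_refl.
  + by move=> c /List.in_map_iff [y [<- _]]; constructor.
- move=> y; split.
  + case/leaf_inv => [[E _] | [c [Hc ll]]].
      by exfalso; exact: (map_undup_nil (f := fun y : Ls => Nd y [::]) (rule_body_nil r) E).
    case/List.in_map_iff: Hc => z [Ez zin]; subst c.
    case/leaf_inv: ll => [[_ ->] | [c' [[] _]]].
    have zb : z \in body by rewrite -mem_undup; exact: mem_In zin.
    have [b bS Ez] := hb _ zb; subst z.
    by exists b => //; rewrite inE.
  + move=> [b]; rewrite inE /= => bin <-.
    apply: (@ll_child DD _ _ (Nd (inl b) [::]) _); last constructor.
    apply/List.in_map_iff; exists (inl b); split => //.
    by apply: In_mem; rewrite mem_undup.
Qed.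

Lemma graph_neq (S : {set A}) x y : graph_of S x y -> x != y.
Proof. by case/existsP => a /andP [_ /eqP E]; have := valP a; rewrite E. Qed.

Lemma graph_mono (U S : {set A}) : U \subset S -> subrel (graph_of U) (graph_of S).
Proof.
move=> sub x y /existsP [a /andP [aU Ea]]; apply/existsP; exists a.
by rewrite (subsetP sub _ aU).
Qed.

Lemma connect_mono (U S : {set A}) : U \subset S ->
  subrel (connect (graph_of U)) (connect (graph_of S)).
Proof.
move=> sub; apply: connect_sub => x y G; apply: connect1; exact: graph_mono G.
Qed.

Lemma path_connect_nth (G : rel V) (x0 : V) s :
  (forall j, j.+1 < size s -> G (nth x0 s j) (nth x0 s j.+1)) ->
  forall j l, j <= l -> l < size s -> connect G (nth x0 s j) (nth x0 s l).
Proof.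
move=> H j; elim=> [|l IH].
  by rewrite leqn0 => /eqP -> _; exact: connect0.
rewrite leq_eqVlt => /orP [/eqP -> _|jl ls]; first exact: connect0.
apply: connect_trans (IH jl (ltnW ls)) _; apply: connect1; exact: H.
Qed.

Lemma rule_dest (S : {set A}) a body : @dag_rule V (inr a) body ->
  (forall y, y \in body -> exists2 b, b \in S & y = inl b) ->
  (exists2 b, b \in S & (b != a) /\ pair_of b = pair_of a) \/
  (a \in S /\ exists x y, graph_of S x y /\ connect (graph_of S) y x).
Proof.
case=> [[a' [b [nab Ep [Ea] ->]]] | [x1 [rest [i [Hl Hd Hi Hc Hb]]]]] hb.
  subst a'; left; have [b' b'S [Eb]] := hb _ (mem_head _ _); subst b'.
  by exists b => //; rewrite eq_sym.
right.
set s := x1 :: rest in Hd Hi Hc Hb.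
have key : forall j, j.+1 < size s ->
    exists2 b, b \in S & val b = inl (nth x1 s j, nth x1 s j.+1).
  move=> j js.
  have sb : size body = (size s).-1.
    by rewrite -(size_map (@code V)) Hb size_map size_iota.
  have jb : j < size body by rewrite sb; case: (size s) js.
  have [b bS Eb] := hb _ (mem_nth (inr a) jb).
  exists b => //.
  have := congr1 (fun l => nth (false, inl (x1, x1)) l j) Hb.
  have jl : j < (size s).-1 by rewrite -sb.
  have ji : j < size (iota 0 (size s).-1) by rewrite size_iota.
  rewrite /= (nth_map (inr a)) // (nth_map 0) // nth_iota //.
  by rewrite Eb /= => [[]].
have edge : forall j, j.+1 < size s -> graph_of S (nth x1 s j) (nth x1 s j.+1).
  move=> j /key [b bS Eb]; apply/existsP; exists b; by rewrite bS Eb eqxx.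
have [b bS Eb] := key i Hi.
have Ea : val a = val b by move: Hc; rewrite Eb /= => [[]].
split; first by rewrite (val_inj Ea).
exists (nth x1 s i), (nth x1 s i.+1); split; first exact: edge.
have sz : 0 < size s by [].
have h1 : i.+1 <= (size s).-1 by rewrite -ltnS prednK.
have h2 : (size s).-1 < size s by rewrite prednK.
apply: connect_trans (path_connect_nth edge h1 h2) _.
rewrite nth_last /= Hl.
exact: (path_connect_nth edge (leq0n i) (ltnW Hi)).
Qed.

Lemma cycle_attack (S : {set A}) x y : graph_of S x y ->
  connect (graph_of S) y x -> @attacks DD S S.
Proof.
move=> Gxy /connectP [p pth Ex].
have [a /andP [aS /eqP Ea]] := existsP Gxy.
set s := x :: y :: p.
pose arr j := odflt a (insub (inl (nth x s j, nth x s j.+1)) : option A).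
have edge : forall j, j.+1 < size s -> graph_of S (nth x s j) (nth x s j.+1).
  move=> j js.
  have P : path (graph_of S) x (y :: p) by rewrite /= Gxy.
  exact: (pathP x P).
have arrE : forall j, j.+1 < size s ->
    arr j \in S /\ val (arr j) = inl (nth x s j, nth x s j.+1).
  move=> j /edge /existsP [c /andP [cS /eqP Ec]].
  by rewrite /arr -Ec valK /=.
apply: (@attack_cons S S a [seq inl (arr j) | j <- iota 0 (size s).-1]) => //.
- right; exists x, (y :: p), 0; split.
  + by rewrite /= -Ex.
  + move=> j js; exact: graph_neq (edge j js).
  + by [].
  + by rewrite /= Ea.
  + rewrite -map_comp; apply/eq_in_map => j; rewrite mem_iota => /andP [_ js] /=.
    by have [_ ->] := arrE j js.
- move=> z /mapP [j]; rewrite mem_iota => /andP [_ js] ->.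
  by exists (arr j) => //; have [] := arrE j js.
Qed.

Definition onepp (S : {set A}) :=
  forall a b, a \in S -> b \in S -> pair_of a = pair_of b -> a = b.
Definition full (S : {set A}) :=
  forall a, exists2 b, b \in S & pair_of b = pair_of a.

Lemma pair_attack (S T : {set A}) a b : a \in T -> b \in S -> a != b ->
  pair_of a = pair_of b -> @attacks DD S T.
Proof.
move=> aT bS nab Ep; apply: (@attack_cons S T a [:: inl b]) => //.
- by left; exists a, b; split.
- by move=> y; rewrite inE => /eqP ->; exists b.
Qed.

Lemma attack_dest (S T : {set A}) : @attacks DD S T -> exists2 a, a \in T &
  ((exists2 b, b \in S & (b != a) /\ pair_of b = pair_of a) \/
   (a \in S /\ exists x y, graph_of S x y /\ connect (graph_of S) y x)).
Proof.
move=> [S' [a [sub aT d]]]; exists a => //.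
have [body [r hb]] := derives_inr d.
apply: rule_dest r _ => y /hb [b bS ->]; exists b => //; exact: (subsetP sub).
Qed.

Lemma cf_onepp S : @conflict_free DD S -> onepp S.
Proof.
move=> cf a b aS bS E; apply/eqP/negPn/negP => nab; apply: cf.
exact: pair_attack aS bS nab E.
Qed.

Lemma cf_acyc S : @conflict_free DD S -> acyclic (graph_of S).
Proof.
move=> cf x y Gxy; apply/negP => C; apply: cf; exact: cycle_attack Gxy C.
Qed.

Lemma L1 S : onepp S -> full S -> acyclic (graph_of S) -> @stable DD S.
Proof.
move=> op fu ac.
have noCyc : forall U : {set A}, U \subset S -> forall x y, graph_of U x y ->
    connect (graph_of U) y x -> False.
  move=> U sub x y G C; have := ac x y (graph_mono sub G).
  by rewrite (connect_mono sub C).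
have cf : @conflict_free DD S.
  move=> /attack_dest [a aS [[b bS [nba Ep]] | [_ [x [y [G C]]]]]].
  - by move: nba; rewrite (op _ _ bS aS Ep) eqxx.
  - exact: noCyc (subxx S) x y G C.
split; first split => //.
- move=> U /attack_dest [a aS [[b bU [nba Ep]] | [_ [x [y [G C]]]]]].
  + exact: (pair_attack bU aS).
  + case: (boolP (U \subset S)) => [sub | /subsetPn [b bU bnS]].
      by case: (noCyc U sub x y G C).
    have [c cS Ep] := fu b.
    have nbc : b != c by apply/eqP => E; rewrite E cS in bnS.
    apply: (pair_attack bU cS nbc); by rewrite Ep.
- move=> a anS; have [c cS Ep] := fu a.
  have nac : a != c by apply/eqP => E; rewrite E cS in anS.
  apply: (@pair_attack S [set a] a c (set11 a) cS nac); by rewrite Ep.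
Qed.

Lemma stable_full S : @stable DD S -> full S.
Proof.
move=> [_ st] a; case: (boolP (a \in S)) => [aS|anS]; first by exists a.
case/attack_dest: (st a anS) => a'; rewrite inE => /eqP ->.
case=> [[b bS [_ Ep]]|[aS _]]; first by exists b.
by rewrite aS in anS.
Qed.

Definition isnoe (a : A) := if val a is inr _ then true else false.

Lemma noe_inj a b : isnoe a -> isnoe b -> pair_of a = pair_of b -> a = b.
Proof.
rewrite /isnoe /pair_of => na nb E; apply: val_inj; move: na nb E.
by case: (val a) => [//|e]; case: (val b) => [//|e'] _ _ ->.
Qed.

Lemma pair_card (a : A) : #|pair_of a| == 2.
Proof.
case: a => [[[x y]|e] /= ok]; last exact: ok.
by rewrite /pair_of /= cards2 ok.
Qed.

Lemma preferred_stable S : @preferred DD S -> @stable DD S.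
Proof.
move=> [[[cf df] cmp] mx].
have op := cf_onepp cf; have ac := cf_acyc cf.
pose T := S :|: [set a | isnoe a && [forall b in S, pair_of b != pair_of a]].
have gT : graph_of T =2 graph_of S.
  move=> x y; apply/existsP/existsP => [[a /andP [aT Ea]]|[a /andP [aS Ea]]];
    exists a; rewrite ?Ea ?andbT.
  - move: aT; rewrite !inE => /orP [//|/andP [ni _]].
    by move/eqP: Ea ni; rewrite /isnoe => ->.
  - by rewrite inE aS.
have stT : @stable DD T.
  apply: L1.
  - move=> a b; rewrite !inE => /orP[aS|/andP[na fa]] /orP[bS|/andP[nb fb]] E.
    + exact: op.
    + by move/forallP: fb => /(_ a); rewrite aS E eqxx.
    + by move/forallP: fa => /(_ b); rewrite bS E eqxx.
    + exact: noe_inj.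
  - move=> a.
    case: (boolP [exists b in S, pair_of b == pair_of a]).
      by case/existsP => b /andP [bS /eqP E]; exists b; rewrite ?inE ?bS.
    move=> nex; exists (Sub (inr (pair_of a)) (pair_card a) : A) => //.
    rewrite !inE; apply/orP; right; apply/andP; split => //.
    apply/forallP => b; apply/implyP => bS; apply/negP => /eqP E.
    have E' : pair_of b = pair_of a by rewrite E.
    by move/negP: nex; apply; apply/existsP; exists b; rewrite bS E' eqxx.
  - by move=> x y; rewrite gT (eq_connect gT); exact: ac.
have sST : S \subset T by apply: subsetUl.
have TS := mx T (stable_complete stT) sST.
by rewrite -TS.
Qed.

Lemma ext_stable sg S : extension sg S <-> @stable DD S.
Proof.
case: sg => /=; split; [exact: preferred_stable | exact: stable_preferred | by [] | by []].
Qed.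

Definition SG (G : rel V) : {set A} :=
  [set a | match val a with
           | inl (x, y) => G x y
           | inr e => [forall x, forall y, ([set x; y] == e) ==> ~~ G x y]
           end].

Lemma acyc_irr (G : rel V) x : acyclic G -> ~~ G x x.
Proof.
move=> ac; apply/negP => Gxx; by move: (ac x x Gxx); rewrite connect0.
Qed.

Lemma set2_eq (x y u v : V) : x != y -> [set x; y] = [set u; v] ->
  (x = u /\ y = v) \/ (x = v /\ y = u).
Proof.
move=> nxy E.
have : x \in [set u; v] by rewrite -E set21.
have : y \in [set u; v] by rewrite -E set22.
rewrite !inE => /orP [] /eqP Ey /orP [] /eqP Ex; subst;
  rewrite ?eqxx in nxy; by [left|right].
Qed.

End Dag.

Theorem corollary1 (V : finType) (sg : semantics) :
  (forall G : rel V, acyclic G ->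
     exists! S : {set asm (D_dag V)}, extension sg S /\ graph_of S =2 G)
  /\
  (forall S : {set asm (D_dag V)}, extension sg S -> acyclic (graph_of S)).
Proof.
split; last first.
  by move=> S /ext_stable [[cf _] _]; exact: cf_acyc.
move=> G ac.
have nxyG : forall x y, G x y -> x != y.
  by move=> x y Gxy; apply/eqP => E; move: Gxy; rewrite E (negbTE (acyc_irr y ac)).
have gS : graph_of (SG G) =2 G.
  move=> x y; apply/existsP/idP => [[a /andP [aS /eqP Ea]] | Gxy].
    by move: aS; rewrite inE Ea.
  exists (Sub (inl (x, y)) (nxyG x y Gxy) : dag_asm V).
  by rewrite inE /= Gxy eqxx.
exists (SG G); split.
  split; last exact: gS.
  apply/ext_stable; apply: L1.
  - move=> [[[x y]|e] pa] [[[u v]|e'] pb]; rewrite !inE /pair_of /= => Ga Gb E.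
    + case: (set2_eq pa E) => [[ex ey]|[ex ey]]; subst.
        by apply: val_inj.
      by move: (ac _ _ Ga); rewrite connect1.
    + exfalso; by move/forallP: Gb => /(_ x) /forallP /(_ y); rewrite E eqxx Ga.
    + exfalso; by move/forallP: Ga => /(_ u) /forallP /(_ v); rewrite E eqxx Gb.
    + by subst; apply: val_inj.
  - move=> a; set e := pair_of a.
    case: (boolP [exists x, exists y, ([set x; y] == e) && G x y]).
      case/existsP => x /existsP [y /andP [/eqP E Gxy]].
      exists (Sub (inl (x, y)) (nxyG x y Gxy) : dag_asm V).
        by rewrite inE /= Gxy.
      by rewrite /pair_of /= E.
    move=> nex; exists (Sub (inr e) (pair_card a) : dag_asm V) => //.
    rewrite inE /=; apply/forallP => x; apply/forallP => y.
    apply/implyP => /eqP E; apply/negP => Gxy.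
    by move/negP: nex; apply; apply/existsP; exists x; apply/existsP; exists y;
      rewrite E eqxx Gxy.
  - by move=> x y; rewrite gS (eq_connect gS); exact: ac.
move=> S [/ext_stable st gS'].
have op := cf_onepp st.1.1; have fu := stable_full st.
apply/setP => a; rewrite inE; symmetry.
case Ea: (val a) => [[x y]|e].
  rewrite -gS'; apply/idP/existsP => [aS|[b /andP [bS /eqP Eb]]].
    by exists a; rewrite aS Ea eqxx.
  by have -> : a = b by apply: val_inj; rewrite Ea Eb.
apply/idP/idP.
  move=> aS; apply/forallP => x; apply/forallP => y; apply/implyP => /eqP E.
  rewrite -gS'; apply/negP => /existsP [b /andP [bS /eqP Eb]].
  have pe : pair_of a = pair_of b by rewrite /pair_of Ea Eb /= E.
  have abe := op _ _ aS bS pe.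
  by move: Ea; rewrite abe Eb.
move=> H; have [b bS Eb] := fu a; suff -> : a = b by [].
case Eb': (val b) => [[u v]|e'].
  exfalso.
  have : graph_of S u v by apply/existsP; exists b; rewrite bS Eb' eqxx.
  rewrite gS'; move/forallP: H => /(_ u) /forallP /(_ v).
  have -> : [set u; v] = e by move: Eb; rewrite /pair_of Eb' Ea.
  by rewrite eqxx /= => nG G'; rewrite G' in nG.
apply: val_inj; rewrite Ea Eb'; move: Eb; rewrite /pair_of Ea Eb' /= => -> //.
Qed.
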